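(* For every $n\ge 2$, let $\mathsf D_n=\{x\in\mathbb Z^n:\sum_i x_i\equiv 0\bmod 2\}$ and $t=\lfloor (n-2)/2\rfloor$. Then the set of isomorphism types of the groups $\mathsf D_n/\Lambda'$, where $\Lambda'$ runs through the sublattices of $\mathsf D_n$ generated by $n$ linearly independent minimal vectors of $\mathsf D_n$, is exactly $\{(\mathbb Z/2\mathbb Z)^k: 0\le k\le t\}$.
   Context: Minimal vectors of a lattice are its nonzero vectors of smallest norm $x\cdot x$ (for $\mathsf D_n$ these are the vectors $\pm\varepsilon_i\pm\varepsilon_j$, $i\ne j$). In the paper this set is written $\{1,2,\dots,2^t\}$, where $2^k$ denotes $(\mathbb Z/2\mathbb Z)^k$. *)

(* Defs.v *)
From HB Require Import structures.
From mathcomp Require Import all_boot all_order all_algebra.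
Set Implicit Arguments. Unset Strict Implicit. Unset Printing Implicit Defensive.
Import Order.TTheory GRing.Theory Num.Theory.
Local Open Scope ring_scope.

Definition inD (n : nat) (x : 'rV[int]_n) : Prop := ~~ odd (absz (\sum_i x ord0 i)).

Definition norm2 (n : nat) (x : 'rV[int]_n) : int := \sum_i (x ord0 i) ^+ 2.

Definition minimal_vec (n : nat) (x : 'rV[int]_n) : Prop :=
  [/\ inD x, x != 0 & forall y : 'rV[int]_n, inD y -> y != 0 -> norm2 x <= norm2 y].

Definition lin_indep (m n : nat) (M : 'M[int]_(m, n)) : Prop :=
  forall c : 'rV[int]_m, c *m M = 0 -> c = 0.

Definition in_span (m n : nat) (M : 'M[int]_(m, n)) (x : 'rV[int]_n) : Prop :=
  exists c : 'rV[int]_m, x = c *m M.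

(* D_n / <rows of M> is isomorphic to the abelian group G, witnessed (first
   isomorphism theorem) by a surjective group homomorphism D_n -> G whose
   kernel is exactly the sublattice generated by the rows of M. *)
Definition quotient_iso (n : nat) (M : 'M[int]_n) (G : zmodType) : Prop :=
  exists phi : 'rV[int]_n -> G,
    [/\ forall x y, inD x -> inD y -> phi (x + y) = phi x + phi y,
        forall z : G, exists2 x, inD x & phi x = z
      & forall x, inD x -> (phi x = 0 <-> in_span M x)].

Definition elem2 (k : nat) : zmodType := 'rV['F_2]_k.

(* Main.v *)
Require Import Defs.
From HB Require Import structures.
From mathcomp Require Import all_boot all_order all_algebra.
From mathcomp Require Import zify ring lra.
Import Order.TTheory GRing.Theory Num.Theory.
Local Open Scope ring_scope.
Set Implicit Arguments. Unset Strict Implicit. Unset Printing Implicit Defensive.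

Definition red (z : int) : 'F_2 := z%:~R.

Lemma F2_nat_eq0 (m : nat) : ((m%:R : 'F_2) == 0) = (2 %| m)%N.
Proof. by rewrite -val_eqE /= val_Fp_nat. Qed.

Lemma red_eq0 (z : int) : (red z == 0) = (2 %| z)%Z.
Proof.
rewrite /red dvdzE; case: z => m.
  by rewrite /= -F2_nat_eq0.
by rewrite NegzE mulrNz oppr_eq0 /= -F2_nat_eq0.
Qed.

Lemma redD (x y : int) : red (x + y) = red x + red y.
Proof. by rewrite /red intrD. Qed.
Lemma redM (x y : int) : red (x * y) = red x * red y.
Proof. by rewrite /red intrM. Qed.
Lemma redN (x : int) : red (- x) = red x.
Proof. rewrite /red intrN. have := F2_nat_eq0 2. Abort.

Lemma F2_opp (a : 'F_2) : - a = a.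
Proof. by case: a => [[|[|]]] //= H; apply: val_inj. Qed.
Lemma F2_cases (a : 'F_2) : a = 0 \/ a = 1.
Proof. case: a => [[|[|]]] //= H; [left|right]; exact: val_inj. Qed.
Lemma F2_sq (a : 'F_2) : a * a = a.
Proof. by case: (F2_cases a) => ->; rewrite ?mulr0 ?mulr1. Qed.

Definition rootf n (x : 'rV[int]_n) (a b : 'I_n) (s t : int) :=
  [/\ a != b, (s == 1) || (s == -1), (t == 1) || (t == -1) &
      forall j, x 0 j = (if j == a then s else 0) + (if j == b then t else 0)].

Lemma sum_pick n (R : nzRingType) (a : 'I_n) (c : R) (w : 'I_n -> R) :
  \sum_j (if j == a then c else 0) * w j = c * w a.
Proof.
rewrite (eq_bigr (fun j => if j == a then c * w j else 0)); last first.
  by move=> j _; case: eqP => _; rewrite ?mul0r.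
by rewrite -big_mkcond big_pred1_eq.
Qed.

Lemma rootf_sum n (x : 'rV[int]_n) a b s t (R : nzRingType) (w : 'I_n -> R) :
  rootf x a b s t -> \sum_j (x 0 j)%:~R * w j = s%:~R * w a + t%:~R * w b.
Proof.
case=> _ _ _ hx.
rewrite (eq_bigr (fun j => (if j == a then s%:~R else 0) * w j +
                           (if j == b then t%:~R else 0) * w j)); last first.
  by move=> j _; rewrite hx intrD mulrDl; do 2 case: eqP => _.
by rewrite big_split /= !sum_pick.
Qed.

Lemma exists_nz n (x : 'rV[int]_n) : x != 0 -> exists a, x 0 a != 0.
Proof.
move=> hx; case: (pickP (fun a => x 0 a != 0)) => [a ha|h]; first by exists a.
case/eqP: hx; apply/rowP => j; rewrite mxE; have := h j; by move/negbFE/eqP.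
Qed.

Lemma norm2E n (x : 'rV[int]_n) : norm2 x = \sum_j (x 0 j)%:~R * x 0 j.
Proof. by apply: eq_bigr => j _; rewrite intz expr2. Qed.

Lemma small_rootf n (x : 'rV[int]_n) :
  inD x -> x != 0 -> norm2 x <= 2 -> exists a b s t, rootf x a b s t.
Proof.
move=> hD hx hN; have [a ha] := exists_nz hx.
have hNa : norm2 x = x 0 a ^+ 2 + \sum_(j | j != a) x 0 j ^+ 2 by rewrite /norm2 (bigD1 a).
have ge0 : forall P, 0 <= \sum_(j | P j) x 0 j ^+ 2.
  by move=> P; apply: sumr_ge0 => j _; rewrite exprn_even_ge0.
case: (pickP (fun j => (j != a) && (x 0 j != 0))) => [b /andP[hba hb]|hnone].
  have hNb : \sum_(j | j != a) x 0 j ^+ 2 = x 0 b ^+ 2 + \sum_(j | (j != a) && (j != b)) x 0 j ^+ 2.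
    by rewrite (bigD1 b).
  have hr := ge0 (fun j => (j != a) && (j != b)).
  set r := \sum_(j | (j != a) && (j != b)) x 0 j ^+ 2 in hNb hr.
  move: hN; rewrite hNa hNb => hN.
  have hr0 : r = 0.
    rewrite !expr2 in hN; nia.
  have hsa : (x 0 a == 1) || (x 0 a == -1).
    move: hN; rewrite hr0 !expr2 => hN; apply/orP; nia.
  have hsb : (x 0 b == 1) || (x 0 b == -1).
    move: hN; rewrite hr0 !expr2 => hN; apply/orP; nia.
  exists a, b, (x 0 a), (x 0 b); split => //; first by rewrite eq_sym.
  move=> j; case: (eqVneq j a) => [->|hja]; first by rewrite eq_sym (negbTE hba) addr0.
  case: (eqVneq j b) => [->|hjb]; first by rewrite add0r.
  rewrite addr0.
  move/eqP: hr0; rewrite psumr_eq0; last by move=> i _; rewrite exprn_even_ge0.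
  move/allP => /(_ j (mem_index_enum j)); rewrite hja hjb /= sqrf_eq0 => /eqP //.
exfalso.
have hsum : \sum_j x 0 j = x 0 a.
  rewrite (bigD1 a) //= big1 ?addr0 // => j hj.
  by have := hnone j; rewrite hj /= => /negbFE/eqP.
have hN1 : norm2 x = x 0 a ^+ 2.
  rewrite hNa big1 ?addr0 // => j hj.
  by have := hnone j; rewrite hj /= => /negbFE/eqP ->; rewrite expr0n.
move: hN hD; rewrite hN1 /inD hsum expr2 => hN.
have : (x 0 a == 1) || (x 0 a == -1) by apply/orP; nia.
by case/orP => /eqP ->.
Qed.

Lemma rootf_at n (x : 'rV[int]_n) a b s t : rootf x a b s t ->
  x 0 a = s /\ x 0 b = t.
Proof.
case=> hab _ _ hx; rewrite !hx !eqxx (negbTE hab) eq_sym (negbTE hab).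
by rewrite addr0 add0r.
Qed.

Lemma rootf_norm2 n (x : 'rV[int]_n) a b s t : rootf x a b s t -> norm2 x = 2.
Proof.
move=> h; rewrite norm2E (rootf_sum _ h); have [-> ->] := rootf_at h.
case: h => _ hs ht _; rewrite !intz.
by case/orP: hs => /eqP->; case/orP: ht => /eqP ->.
Qed.

Lemma rootf_inD n (x : 'rV[int]_n) a b s t : rootf x a b s t -> inD x.
Proof.
move=> h; rewrite /inD.
have := rootf_sum (fun _ => 1 : int) h.
under eq_bigr do rewrite mulr1 intz.
move=> ->; rewrite !mulr1 !intz.
by case: h => _ hs ht _; case/orP: hs => /eqP->; case/orP: ht => /eqP ->.
Qed.

Lemma norm2_ge2 n (y : 'rV[int]_n) : inD y -> y != 0 -> 2 <= norm2 y.
Proof.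
move=> hD hy; case: (lerP (norm2 y) 2) => h; last exact: ltW.
have [a [b [s [t hr]]]] := small_rootf hD hy h.
by rewrite (rootf_norm2 hr).
Qed.

Lemma rootf_min n (x : 'rV[int]_n) a b s t : rootf x a b s t -> minimal_vec x.
Proof.
move=> h; split.
- exact: rootf_inD h.
- apply/eqP => h0; have [ha _] := rootf_at h; move: ha; rewrite h0 mxE => hs.
  by case: h => _ hs' _ _; move: hs'; rewrite -hs.
- by move=> y hD hy; rewrite (rootf_norm2 h); exact: norm2_ge2.
Qed.

Lemma min_rootf n (x : 'rV[int]_n) : (2 <= n)%N -> minimal_vec x ->
  exists a b s t, rootf x a b s t.
Proof.
move=> hn [hD hx hmin].
have h0 : (0 < n)%N by lia.
pose a0 := Ordinal h0; pose b0 := Ordinal hn.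
pose e : 'rV[int]_n := \row_j ((if j == a0 then 1 else 0) + (if j == b0 then 1 else 0)).
have he : rootf e a0 b0 1 1.
  by split => // j; rewrite mxE.
apply: small_rootf => //.
rewrite -(rootf_norm2 he); apply: hmin; first exact: rootf_inD he.
by have := rootf_min he; case.
Qed.

Definition rowroots n (M : 'M[int]_n) :=
  forall l, exists a b s t, rootf (row l M) a b s t.

Definition MQ n (M : 'M[int]_n) : 'M[rat]_n := map_mx (intr : int -> rat) M.

Lemma indep_det n (M : 'M[int]_n) : lin_indep M -> \det M != 0.
Proof.
move=> hM; apply/negP => /det0P [v hv hvM].
by move/eqP: hv; apply; apply: hM.
Qed.

Lemma det_unit n (M : 'M[int]_n) : \det M != 0 -> MQ M \in unitmx.
Proof. by move=> h; rewrite unitmxE unitfE /MQ det_map_mx intr_eq0. Qed.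

Lemma rker n (M : 'M[int]_n) (v : 'cV[int]_n) : \det M != 0 -> M *m v = 0 -> v = 0.
Proof.
move=> hd hv; apply/eqP.
have : \adj M *m (M *m v) = 0 by rewrite hv mulmx0.
rewrite mulmxA mul_adj_mx mul_scalar_mx => /eqP.
by rewrite scalemx_eq0 (negbTE hd).
Qed.

Lemma rowrootsE n (M : 'M[int]_n) l a b s t (R : nzRingType) (w : 'I_n -> R) :
  rootf (row l M) a b s t ->
  \sum_j (M l j)%:~R * w j = s%:~R * w a + t%:~R * w b.
Proof.
move=> h; rewrite -(rootf_sum _ h); apply: eq_bigr => j _; by rewrite mxE.
Qed.

Section Cls.
Variable g : rat.
Hypothesis hg : 2 * g \isn't a Num.int.
Definition cls (y : rat) : int :=
  if y - g \is a Num.int then 1 else if y + g \is a Num.int then -1 else 0.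

Lemma cls_shift y m : m \is a Num.int -> cls (y + m) = cls y.
Proof.
move=> hm; rewrite /cls.
by rewrite -addrA (addrC m) addrA (rpredDr _ hm) -addrA (addrC m) addrA (rpredDr _ hm).
Qed.

Lemma cls_opp y : cls (- y) = - cls y.
Proof.
rewrite /cls -opprD rpredN -[- y + g]opprK opprD opprK rpredN.
have H : (y - g \is a Num.int) -> (y + g \is a Num.int) -> False.
  move=> h1 h2; move/negP: hg; apply.
  by rewrite (_ : 2 * g = (y + g) - (y - g)); [exact: rpredB | ring].
case h1: (y - g \is a Num.int); case h2: (y + g \is a Num.int) => //.
exfalso; exact: H h1 h2.
Qed.

Lemma cls_sum y z : y + z \is a Num.int -> cls z = - cls y.
Proof.
move=> h; rewrite -cls_opp -(cls_shift (- y) h); congr cls; ring.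
Qed.

Lemma cls_sign (s : int) y : (s == 1) || (s == -1) -> cls (s%:~R * y) = s * cls y.
Proof.
case/orP => /eqP ->; first by rewrite mulr1z !mul1r.
by rewrite mulrN1z mulN1r mulNr mul1r cls_opp.
Qed.

Lemma cls_g : cls g = 1.
Proof. by rewrite /cls subrr rpred0. Qed.
End Cls.

Lemma half_int n (M : 'M[int]_n) (u : 'cV[rat]_n) : rowroots M -> \det M != 0 ->
  (forall l, (MQ M *m u) l 0 \is a Num.int) -> forall i, 2 * u i 0 \is a Num.int.
Proof.
move=> hR hd hu i; apply/negPn/negP => hg.
pose v : 'cV[int]_n := \col_j cls (u i 0) (u j 0).
have hv : M *m v = 0.
  apply/colP => l; rewrite !mxE.
  have [a [b [s [t hr]]]] := hR l.
  have hs : (s == 1) || (s == -1) by case: hr.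
  have ht : (t == 1) || (t == -1) by case: hr.
  have := rowrootsE (fun j => v j 0) hr.
  under eq_bigr do rewrite intz.
  move=> ->; rewrite !intz !mxE -!cls_sign //.
  rewrite (@cls_sum _ hg (s%:~R * u a 0) (t%:~R * u b 0)) ?addrN //.
  have := hu l; rewrite mxE.
  under eq_bigr do rewrite mxE.
  by rewrite (rowrootsE (fun j => u j 0) hr).
have := rker hd hv => /colP /(_ i); rewrite !mxE cls_g //.
Qed.

Lemma two_span n (M : 'M[int]_n) : rowroots M -> \det M != 0 ->
  exists B : 'M[int]_n, B *m M = 2%:M.
Proof.
move=> hR hd.
have hU := det_unit hd.
pose N := invmx (MQ M).
have hN : forall i j, 2 * N i j \is a Num.int.
  move=> i j.
  have := @half_int n M (col j N) hR hd _ i; rewrite mxE; apply => l.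
  rewrite colE mulmxA -colE mulmxV // !mxE.
  by case: (l == j); rewrite ?mulr1n ?mulr0n ?rpred1 ?rpred0.
exists (\matrix_(i, j) Num.floor (2 * N i j)).
have e1 : map_mx (intr : int -> rat) (\matrix_(i, j) Num.floor (2 * N i j)) = 2 *: N.
  by apply/matrixP => i j; rewrite !mxE floorK // hN.
have e2 : map_mx (intr : int -> rat) ((\matrix_(i, j) Num.floor (2 * N i j)) *m M)
         = map_mx (intr : int -> rat) (2%:M).
  rewrite map_mxM e1 -scalemxAl mulVmx // map_scalar_mx.
  by rewrite scale_scalar_mx mulr1.
apply/matrixP => i j; apply: (@intr_inj rat).
by move/matrixP: e2 => /(_ i j); rewrite !mxE.
Qed.

Lemma span2 n (M : 'M[int]_n) (x : 'rV[int]_n) : rowroots M -> \det M != 0 ->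
  in_span M (x *+ 2).
Proof.
move=> hR hd; have [B hB] := two_span hR hd.
exists (x *m B); by rewrite -mulmxA hB mul_mx_scalar scaler_nat.
Qed.

Lemma mx11_eq0 (F : nzRingType) (A : 'M[F]_1) : (A == 0) = (A 0 0 == 0).
Proof.
apply/eqP/eqP => [->|h]; first by rewrite mxE.
by apply/matrixP => i j; rewrite !ord1 h mxE.
Qed.

Definition ones n : 'cV['F_2]_n := const_mx 1.

Lemma inD_E n (x : 'rV[int]_n) :
  inD x = (map_mx (intr : int -> 'F_2) x <= kermx (ones n))%MS.
Proof.
rewrite sub_kermx mx11_eq0 !mxE.
under eq_bigr do rewrite !mxE mulr1.
rewrite -rmorph_sum -/(red _) red_eq0 /inD dvdzE /=.
by rewrite dvdn2.
Qed.

Lemma lift_red n (y : 'rV['F_2]_n) :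
  map_mx (intr : int -> 'F_2) (map_mx (fun a : 'F_2 => Posz (val a)) y) = y.
Proof.
apply/matrixP => i j; rewrite !mxE /=.
by rewrite -[RHS](natr_Zp (y i j)).
Qed.

Lemma red0_half n (d : 'rV[int]_n) : map_mx (intr : int -> 'F_2) d = 0 ->
  d = (map_mx (fun z => (z %/ 2)%Z) d) *+ 2.
Proof.
move/matrixP => h; apply/matrixP => i j.
have := h i j; rewrite !mxE => /eqP; rewrite -/(red _) red_eq0 => h2.
by rewrite -mulr2n -{1}(divzK h2); ring.
Qed.

Lemma sub_ker_seq (F : fieldType) n (s : seq 'rV[F]_n) (j : 'I_n) :
  (forall w, w \in s -> w 0 j = 0) ->
  (\sum_(w <- s) <<w>> <= kermx (delta_mx j (0 : 'I_1)))%MS.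
Proof.
elim: s => [|v s IH] hs; first by rewrite big_nil sub0mx.
rewrite big_cons addsmx_sub genmxE IH; last by move=> w hw; apply: hs; rewrite inE hw orbT.
rewrite andbT sub_kermx -colE mx11_eq0 mxE hs //.
by rewrite inE eqxx.
Qed.

Lemma cov_rank (F : fieldType) n (s : seq 'rV[F]_n) :
  (forall v, v \in s -> (#|[set j | v ord0 j != 0%R]| <= 2)%N) ->
  (#|[set j | has (fun v : 'rV[F]_n => v ord0 j != 0%R) s]| <= 2 * \rank (\sum_(v <- s) <<v>>)%MS)%N.
Proof.
elim: s => [|v s IH] hs.
  by rewrite (_ : [set j | _] = set0) ?cards0 //; apply/setP => j; rewrite !inE.
have hS := IH (fun w hw => hs w (@mem_behead _ (v :: s) w hw)).
have hT := hs v (mem_head v s).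
set S' := [set j | has _ s] in hS.
set T := [set j | v ord0 j != 0%R] in hT.
have -> : [set j | has (fun w : 'rV[F]_n => w ord0 j != 0%R) (v :: s)] = T :|: S'.
  by apply/setP => j; rewrite !inE.
rewrite big_cons.
case: (boolP (T \subset S')) => hsub.
  rewrite (setUidPr hsub); apply: (leq_trans hS).
  by rewrite leq_mul2l mxrankS ?addsmxSr ?orbT.
have [j hjT hjS] := subsetPn hsub.
have hlt : (\rank (\sum_(w <- s) <<w>>) < \rank (<<v>> + \sum_(w <- s) <<w>>))%N.
  apply: rank_ltmx; rewrite ltmxE addsmxSr /=.
  apply/negP => hle.
  have hv : (v <= \sum_(w <- s) <<w>>)%MS.
    apply: submx_trans hle; apply: submx_trans (addsmxSl _ _); by rewrite genmxE.
  have hk := sub_ker_seq (s := s) (j := j).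
  have : (v <= kermx (delta_mx j (0 : 'I_1)))%MS.
    apply: submx_trans hv (hk _) => w hw.
    apply/eqP; apply: contraNT hjS => hw0; rewrite inE; apply/hasP; by exists w.
  rewrite sub_kermx -colE mx11_eq0 mxE; rewrite inE in hjT; by rewrite (negbTE hjT).
have hU := (leq_card_setU T S').1.
move: hU hlt hS hT. set a := #|T :|: S'|. set b := #|T|. set c := #|S'|. set d := \rank _. set e := \rank _.
lia.
Qed.

Lemma le_half (a m : nat) : (a.*2 <= m)%N -> (a <= m./2)%N.
Proof. by move=> h; rewrite -[a]doubleK half_leq. Qed.

Lemma rootf_supp n (x : 'rV[int]_n) a b s t j :
  rootf x a b s t -> j != a -> j != b -> x 0 j = 0.
Proof. by case=> _ _ _ hx ha hb; rewrite hx (negbTE ha) (negbTE hb) addr0. Qed.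

Lemma rootf_red_ne0 n (x : 'rV[int]_n) a b s t j :
  rootf x a b s t -> x 0 j != 0 -> red (x 0 j) != 0.
Proof.
move=> h hj; case: (h) => hab hs ht hx; rewrite red_eq0.
have [ea eb] := rootf_at h.
case: (eqVneq j a) => [->|ha]; first by rewrite ea; case/orP: hs => /eqP->.
case: (eqVneq j b) => [->|hb]; first by rewrite eb; case/orP: ht => /eqP->.
by rewrite (rootf_supp h ha hb) eqxx in hj.
Qed.

Lemma part1 n (M : 'M[int]_n) : (2 <= n)%N -> rowroots M -> \det M != 0 ->
  exists2 k : nat, (k <= (n - 2)./2)%N & quotient_iso M (elem2 k).
Proof.
move=> hn hR hd.
pose R := map_mx (intr : int -> 'F_2) M.
pose E := kermx (ones n).
have hRE : (R <= E)%MS.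
  apply/row_subP => l; rewrite -map_row -inD_E.
  have [a [b [s [t h]]]] := hR l; exact: rootf_inD h.
pose C := (E :\: R)%MS.
have hCR : (C :&: R)%MS = 0 := capmx_diff E R.
have hER : (E <= C + R)%MS.
  have := addsmx_diff_cap_eq E R => /eqmxP /andP [_ h].
  exact: submx_trans h (addsmxS (submx_refl _) (capmxSr _ _)).
pose Bm := row_base C.
pose P := proj_mx C R *m pinvmx Bm.
exists (\rank C).
  have r1 : \rank E = (n - 1)%N.
    rewrite mxrank_ker; congr (_ - _)%N.
    apply/eqP; rewrite eqn_leq rank_leq_col lt0n mxrank_eq0.
    have h0 : (0 < n)%N by lia.
    apply/eqP => /matrixP /(_ (Ordinal h0) 0); rewrite !mxE => /eqP.
    by rewrite oner_eq0.
  have r2 := mxrank_cap_compl E R.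
  have r3 : \rank (E :&: R) = \rank R.
    by apply: eqmx_rank; apply/eqmxP; exact: (capmx_idPr hRE).
  have r4 : (n <= 2 * \rank R)%N.
    pose s := [seq row l R | l <- index_enum 'I_n].
    have hsup : forall v, v \in s -> (#|[set j | v ord0 j != 0%R]| <= 2)%N.
      move=> v /mapP [l _ ->].
      have [a [b [s0 [t h]]]] := hR l.
      apply: (@leq_trans #|[set a; b]|); last by rewrite cards2; case: (a != b).
      apply: subset_leq_card; apply/subsetP => j; rewrite !inE !mxE.
      apply: contraR; rewrite negb_or => /andP [ha hb].
      by have := rootf_supp h ha hb; rewrite mxE => ->.
    have h1 := cov_rank hsup.
    have hT : [set j | has (fun v : 'rV['F_2]_n => v ord0 j != 0%R) s] = setT.
      apply/setP => j; rewrite !inE.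
      have [l hl] : exists l, M l j != 0.
        case: (pickP (fun l => M l j != 0)) => [l hl|hnone]; first by exists l.
        have hcol : M *m delta_mx j (ord0 : 'I_1) = 0.
          rewrite -colE; apply/matrixP => i k; rewrite !mxE.
          by have := hnone i => /negbFE/eqP.
        have := rker hd hcol => /matrixP /(_ j ord0); rewrite !mxE !eqxx /=.
        by move/eqP; rewrite oner_eq0.
      apply/hasP; exists (row l R).
        by apply/mapP; exists l => //; exact: mem_index_enum.
      have [a [b [s0 [t h]]]] := hR l.
      rewrite !mxE; have := rootf_red_ne0 (j := j) h; rewrite mxE; apply => //.
    rewrite hT cardsT card_ord in h1.
    apply: (leq_trans h1); rewrite leq_mul2l mxrankS ?orbT //.
    rewrite big_map; apply/sumsmx_subP => l _; by rewrite genmxE row_sub.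
  apply: le_half.
  move: r1 r2 r3 r4; set cE := \rank E; set cER := \rank (E :&: R); set cR := \rank R;
    set cC := \rank C.
  lia.
pose phi := fun x : 'rV[int]_n => map_mx (intr : int -> 'F_2) x *m P.
exists phi; split.
- by move=> x y _ _; rewrite /phi map_mxD mulmxDl.
- move=> z; pose y := z *m Bm.
  have hyB : (y <= Bm)%MS by rewrite submxMl.
  have hyC : (y <= C)%MS by rewrite -(eq_row_base C).
  exists (map_mx (fun a : 'F_2 => Posz (val a)) y).
    rewrite inD_E lift_red; exact: submx_trans hyC (diffmxSl E R).
  rewrite /phi lift_red /P mulmxA proj_mx_id //.
  apply/eqP; rewrite -subr_eq0 -(mulmx_free_eq0 _ (row_base_free C)) mulmxBl.
  by rewrite mulmxKpV // subrr.
move=> x hx; rewrite inD_E in hx; split.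
- move=> h0.
  set y := map_mx (intr : int -> 'F_2) x in hx h0.
  have hw : (y *m proj_mx C R <= Bm)%MS by rewrite (eq_row_base C) proj_mx_sub.
  have hw0 : y *m proj_mx C R = 0.
    have h0' : y *m P = 0 by exact: h0.
    by rewrite -(mulmxKpV hw) -[y *m _ *m pinvmx _]mulmxA h0' mul0mx.
  have hyR : (y <= R)%MS.
    by have := proj_mx_compl_sub (submx_trans hx hER); rewrite hw0 subr0.
  case/submxP: hyR => cb hcb.
  pose c := map_mx (fun a : 'F_2 => Posz (val a)) cb.
  pose d := x - c *m M.
  have hd0 : map_mx (intr : int -> 'F_2) d = 0.
    by rewrite /d map_mxB map_mxM lift_red -/y hcb subrr.
  have [e he] := span2 (map_mx (fun z => (z %/ 2)%Z) d) hR hd.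
  exists (c + e); rewrite mulmxDl -he -red0_half // /d.
  by rewrite addrC subrK.
- case=> c ->; rewrite /phi map_mxM /P mulmxA proj_mx_0 ?mul0mx //.
  exact: submxMl.
Qed.

Lemma inD_red n (x : 'rV[int]_n) : inD x = (red (\sum_j x 0 j) == 0).
Proof. by rewrite red_eq0 /inD dvdzE /= dvdn2. Qed.

Lemma inD_span n (M : 'M[int]_n) (c : 'rV[int]_n) :
  (forall i, inD (row i M)) -> inD (c *m M).
Proof.
move=> hM; rewrite inD_red.
under eq_bigr do rewrite mxE.
rewrite exchange_big /= /red rmorph_sum /= big1 // => i _.
rewrite -big_distrr /= rmorphM /=.
have := hM i; rewrite inD_red /red.
have -> : \sum_j (row i M) 0 j = \sum_j M i j by apply: eq_bigr => j _; rewrite mxE.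
by move/eqP => ->; rewrite mulr0.
Qed.

Section Part2.
Variables (m k : nat).
Hypothesis hk : (k.*2.+2 <= m.+1)%N.
Local Notation N := m.+1.

Definition aa (i : nat) : nat :=
  if (i < k)%N then (i + k)%N else if (i < k.*2)%N then (i - k)%N
  else if i == k.*2 then k.*2.+1 else k.*2.
Definition tt (i : nat) : int := if (i < k)%N || (i == k.*2) then -1 else 1.

Definition M2 : 'M[int]_N :=
  \matrix_(i, j) ((if (j : nat) == aa i then 1 else 0) + (if j == i then tt i else 0)).

Lemma aa_lt (i : 'I_N) : (aa i < N)%N.
Proof. have := ltn_ord i; rewrite /aa; repeat case: ifP => ?; lia. Qed.

Lemma aa_neq (i : nat) : aa i != i.
Proof. rewrite /aa; repeat case: ifP => ?; lia. Qed.

Lemma M2_rootf (i : 'I_N) : rootf (row i M2) (inord (aa i)) i 1 (tt i).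
Proof.
split.
- by apply/eqP => /(congr1 val); rewrite /= inordK ?aa_lt //; apply/eqP; exact: aa_neq.
- by rewrite eqxx.
- by rewrite /tt; case: ifP.
- move=> j; rewrite !mxE; congr (_ + _).
  by rewrite -val_eqE /= inordK ?aa_lt.
Qed.

Lemma M2_rows : rowroots M2.
Proof. by move=> l; exists (inord (aa l)), l, 1, (tt l); exact: M2_rootf. Qed.

Lemma M2_mul (c : 'rV[int]_N) (j : 'I_N) :
  (c *m M2) 0 j = tt j * c 0 j + \sum_(i : 'I_N | aa i == j) c 0 i.
Proof.
rewrite mxE.
under eq_bigr do rewrite mxE mulrDr.
rewrite big_split /= addrC; congr (_ + _).
  rewrite (bigD1 j) //= eqxx big1 ?addr0; first by rewrite mulrC.
  by move=> i hi; rewrite eq_sym (negbTE hi) mulr0.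
rewrite (bigID (fun i : 'I_N => aa i == j)) /= [X in _ + X]big1 ?addr0.
  by apply: eq_bigr => i /eqP <-; rewrite eqxx mulr1.
by move=> i hi; rewrite eq_sym (negbTE hi) mulr0.
Qed.

Lemma S_single (c : 'rV[int]_N) (j : nat) (p : 'I_N) :
  (forall i : 'I_N, (aa i == j) = (i == p)) ->
  \sum_(i : 'I_N | aa i == j) c 0 i = c 0 p.
Proof.
by move=> h; rewrite (eq_bigl (fun i => i == p)) ?big_pred1_eq // => i; rewrite h.
Qed.

Lemma S_none (c : 'rV[int]_N) (j : nat) :
  (forall i : 'I_N, aa i != j) -> \sum_(i : 'I_N | aa i == j) c 0 i = 0.
Proof. by move=> h; rewrite big_pred0 // => i; rewrite (negbTE (h i)). Qed.

Lemma ordE (p : nat) (i : 'I_N) : (p < N)%N -> (i == inord p :> 'I_N) = (nat_of_ord i == p).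
Proof. by move=> hp; rewrite -val_eqE /= inordK. Qed.

Lemma S_lt (c : 'rV[int]_N) (j : nat) : (j < k)%N ->
  \sum_(i : 'I_N | aa i == j) c 0 i = c 0 (inord (j + k)%N).
Proof.
move=> hj; apply: S_single => i; rewrite ordE; last by lia.
apply/eqP/eqP; rewrite /aa; repeat case: ifP => ?; lia.
Qed.

Lemma S_mid (c : 'rV[int]_N) (j : nat) : (k <= j < k.*2)%N ->
  \sum_(i : 'I_N | aa i == j) c 0 i = c 0 (inord (j - k)%N).
Proof.
move=> hj; apply: S_single => i; rewrite ordE; last by lia.
apply/eqP/eqP; rewrite /aa; repeat case: ifP => ?; lia.
Qed.

Lemma S_2k1 (c : 'rV[int]_N) :
  \sum_(i : 'I_N | aa i == k.*2.+1) c 0 i = c 0 (inord k.*2).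
Proof.
apply: S_single => i; rewrite ordE; last by lia.
apply/eqP/eqP; rewrite /aa; repeat case: ifP => ?; lia.
Qed.

Lemma S_big (c : 'rV[int]_N) (j : nat) : (k.*2.+1 < j)%N ->
  \sum_(i : 'I_N | aa i == j) c 0 i = 0.
Proof.
move=> hj; apply: S_none => i; apply/eqP; rewrite /aa; repeat case: ifP => ?; lia.
Qed.

Lemma ordv (i : 'I_N) : inord (val i) = i.
Proof. exact: inord_val. Qed.

Lemma M2_indep : lin_indep M2.
Proof.
move=> c hc.
have E : forall j : 'I_N, tt j * c 0 j + \sum_(i : 'I_N | aa i == j) c 0 i = 0.
  by move=> j; rewrite -M2_mul hc mxE.
have big0 : forall j : 'I_N, (k.*2.+1 < j)%N -> c 0 j = 0.
  move=> j hj; have := E j; rewrite S_big // addr0 /tt.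
  by case: ifP => [|_]; [lia | rewrite mul1r].
have hpair : forall p : nat, (p < k)%N -> c 0 (inord p) = 0 /\ c 0 (inord (p + k)%N) = 0.
  move=> p hp.
  have e1 := E (inord p); have e2 := E (inord (p + k)%N).
  rewrite inordK in e1; last by lia.
  rewrite inordK in e2; last by lia.
  rewrite S_lt // /tt hp /= in e1.
  rewrite S_mid in e2; last by lia.
  rewrite (_ : (p + k - k)%N = p) in e2; last by lia.
  rewrite /tt in e2; move: e2; case: ifP => [?|_]; first by lia.
  move=> e2; lia.
have h2k : c 0 (inord k.*2) = 0 /\ c 0 (inord k.*2.+1) = 0.
  have e1 := E (inord k.*2); have e2 := E (inord k.*2.+1).
  rewrite inordK in e1; last by lia.
  rewrite inordK in e2; last by lia.
  rewrite S_2k1 /tt in e2; move: e2; case: ifP => [?|_]; first by lia.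
  move=> e2.
  have hs : \sum_(i : 'I_N | aa i == k.*2) c 0 i = c 0 (inord k.*2.+1).
    rewrite (bigD1 (inord k.*2.+1)) /=; last first.
      rewrite inordK; last by lia.
      by rewrite /aa; repeat case: ifP => ?; lia.
    rewrite big1 ?addr0 // => i /andP [hi hne].
    apply: big0; move: hi hne; rewrite ordE; last by lia.
    rewrite /aa; repeat case: ifP => ?; lia.
  rewrite hs /tt eqxx orbT in e1.
  lia.
apply/rowP => j; rewrite mxE.
have hj := ltn_ord j.
case: (ltnP j k) => h1.
  by have := (hpair j h1).1; rewrite ordv.
case: (ltnP j k.*2) => h2.
  have := (hpair (j - k)%N _).2; rewrite (_ : (j - k + k)%N = j) ?ordv //; last by lia.
  by apply; lia.
case: (ltnP k.*2.+1 j) => h3; first exact: big0.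
case: (eqVneq (nat_of_ord j) k.*2) => h4.
  by have := h2k.1; rewrite -h4 ordv.
have h5 : nat_of_ord j = k.*2.+1 by lia.
by have := h2k.2; rewrite -h5 ordv.
Qed.

Definition phi2 (x : 'rV[int]_N) : 'rV['F_2]_k :=
  \row_(l < k) red (x 0 (inord l) + x 0 (inord (l + k)%N)).

Lemma phi2D x y : phi2 (x + y) = phi2 x + phi2 y.
Proof. by apply/rowP => l; rewrite !mxE !redD; ring. Qed.

Lemma red_lift (a : 'F_2) : red (Posz (val a)) = a.
Proof. by rewrite -[RHS](natr_Zp a). Qed.

Lemma inD_sub n (x y : 'rV[int]_n) : inD x -> inD y -> inD (x - y).
Proof.
rewrite !inD_red => /eqP hx /eqP hy.
under eq_bigr do rewrite !mxE.
by rewrite sumrB /red intrB -!/(red _) hx hy subrr.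
Qed.

Lemma M2_quot : quotient_iso M2 (elem2 k).
Proof.
have hdet := indep_det M2_indep.
exists phi2; split.
- by move=> x y _ _; rewrite phi2D.
- move=> z.
  pose x0 : 'rV[int]_N := \row_i (if insub (nat_of_ord i) is Some l then Posz (val (z 0 l)) else 0).
  have hx0 : phi2 x0 = z.
    apply/rowP => l; rewrite !mxE inordK; last by have := ltn_ord l; lia.
    rewrite inordK; last by have := ltn_ord l; lia.
    rewrite valK insubN; last by rewrite -leqNgt leq_addl.
    by rewrite addr0 red_lift.
  pose e : 'rV[int]_N := \row_i (if nat_of_ord i == k.*2 then 1 else 0).
  have he : phi2 e = 0.
    apply/rowP => l; rewrite !mxE inordK; last by have := ltn_ord l; lia.
    rewrite inordK; last by have := ltn_ord l; lia.
    have := ltn_ord l => hl.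
    rewrite (_ : (nat_of_ord l == k.*2) = false); last by apply/eqP; lia.
    rewrite (_ : ((l + k)%N == k.*2) = false); last by apply/eqP; lia.
    by rewrite addr0.
  have hes : red (\sum_j e 0 j) = 1.
    rewrite (bigD1 (inord k.*2)) //= big1.
      rewrite !mxE inordK ?eqxx; last by lia.
      by apply: val_inj.
    move=> i hi; rewrite mxE; case: eqP => // hik.
    by move: hi; rewrite ordE ?hik ?eqxx //; lia.
  exists (if red (\sum_j x0 0 j) == 0 then x0 else x0 + e).
    rewrite inD_red; case: ifP => // /negbT hx.
    under eq_bigr do rewrite mxE.
    rewrite big_split /= redD hes.
    by case: (F2_cases (red (\sum_j x0 0 j))) hx => ->.
  by case: ifP; rewrite ?phi2D hx0 ?he ?addr0.
move=> x hx; split.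
- move=> h0.
  pose c : 'rV[int]_N := \row_i (if (i < k)%N || (nat_of_ord i == k.*2) then 0 else x 0 i).
  pose u := x - c *m M2.
  have hcj : forall j : 'I_N, c 0 j = if (j < k)%N || (nat_of_ord j == k.*2) then 0 else x 0 j.
    by move=> j; rewrite mxE.
  have hu : forall j : 'I_N, nat_of_ord j != k.*2 -> red (u 0 j) = 0.
    move=> j hj.
    have -> : u 0 j = x 0 j - (c *m M2) 0 j by rewrite /u !mxE.
    rewrite M2_mul hcj.
    have hjN := ltn_ord j.
    have hF : forall b : bool, b = false -> (if b then (0 : int) else x 0 j) = x 0 j.
      by move=> b ->.
    case: (ltnP j k) => h1.
      rewrite S_lt // hcj inordK; last by lia.
      rewrite (_ : ((j + k)%N < k)%N = false); last by apply/negbTE; rewrite -leqNgt leq_addl.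
      rewrite (_ : ((j + k)%N == k.*2) = false); last by apply/eqP; lia.
      rewrite /= mulr0 add0r /red intrB F2_opp -intrD.
      have h0' : phi2 x = 0 :> 'rV['F_2]_k := h0.
      move/rowP: h0' => /(_ (Ordinal h1)); rewrite !mxE /=.
      by have ej : (inord (nat_of_ord j) : 'I_N) = j := inord_val j; rewrite ej.
    have hjk : (j < k)%N = false by rewrite ltnNge h1.
    rewrite (negbTE hj) /tt hjk (negbTE hj) /= mul1r.
    case: (ltnP j k.*2) => h2.
      rewrite S_mid; last by lia.
      rewrite hcj inordK; last by lia.
      rewrite (_ : ((j - k)%N < k)%N = true) ?addr0 ?subrr //; lia.
    case: (ltnP k.*2.+1 j) => h3; first by rewrite S_big // addr0 subrr.
    have h5 : nat_of_ord j = k.*2.+1 by lia.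
    rewrite h5 S_2k1 hcj inordK ?eqxx ?orbT ?addr0 ?subrr //; lia.
  have hcM : inD (c *m M2).
    by apply: inD_span => i; apply: (rootf_inD (M2_rootf i)).
  have hu0 : inD u by apply: inD_sub.
  have h2k : red (u 0 (inord k.*2)) = 0.
    move: hu0; rewrite inD_red /red rmorph_sum /= (bigD1 (inord k.*2)) //= big1.
      by rewrite addr0 => /eqP.
    move=> j hj; have := hu j; rewrite /red; apply; move: hj; rewrite ordE //; lia.
  have hred : map_mx (intr : int -> 'F_2) u = 0.
    apply/rowP => j; rewrite [LHS]mxE [RHS]mxE.
    case: (eqVneq (nat_of_ord j) k.*2) => hj; last exact: (hu j hj).
    have ej : j = inord k.*2 by apply/eqP; rewrite ordE ?hj //; lia.
    by rewrite ej.
  have [e he] := span2 (map_mx (fun z => (z %/ 2)%Z) u) M2_rows hdet.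
  exists (c + e); rewrite mulmxDl -he -red0_half //.
  by rewrite /u addrC subrK.
- case=> c ->; apply/rowP => l; rewrite mxE !M2_mul.
  have hl := ltn_ord l.
  rewrite !inordK; try lia.
  rewrite S_lt // S_mid; last by lia.
  rewrite (_ : (l + k - k)%N = l); last by lia.
  rewrite /tt hl /=.
  rewrite (_ : ((l + k)%N < k)%N = false); last by apply/negbTE; rewrite -leqNgt leq_addl.
  rewrite (_ : ((l + k)%N == k.*2) = false); last by apply/eqP; lia.
  rewrite /= mxE.
  set a := c 0 (inord l); set b := c 0 (inord (l + k)%N).
  rewrite (_ : -1 * a + b + (1 * b + a) = b + b); last by ring.
  by rewrite redD -{1}(F2_opp (red b)) addNr.
Qed.
End Part2.

Theorem mainTheorem6 (n : nat) (hn : (2 <= n)%N) :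
  (forall M : 'M[int]_n,
     (forall i, minimal_vec (row i M)) -> lin_indep M ->
     exists2 k : nat, (k <= (n - 2)./2)%N & quotient_iso M (elem2 k)) /\
  (forall k : nat, (k <= (n - 2)./2)%N ->
     exists M : 'M[int]_n,
       [/\ forall i, minimal_vec (row i M), lin_indep M & quotient_iso M (elem2 k)]).
Proof.
split.
  move=> M hmin hind; apply: part1 => //; last exact: indep_det.
  by move=> l; exact: min_rootf hn (hmin l).
move=> k hk; case: n hn hk => [//|m] hn hk.
have hk' : (k.*2.+2 <= m.+1)%N.
  have h1 : (k.*2 <= ((m.+1 - 2)./2).*2)%N by rewrite leq_double.
  have h2 := odd_double_half (m.+1 - 2).
  move: h1 h2; set y := (m.+1 - 2)./2; set o := odd _; case: o => /= ?; lia.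
exists (M2 m k); split.
- by move=> i; apply: rootf_min (M2_rootf hk' i).
- exact: M2_indep hk'.
- exact: M2_quot hk'.
Qed.
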